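(* $\mathcal{M}_{3,3}=\overline{\operatorname{RBM}_{3,2}}$, where the bar denotes topological closure in $\Delta_7$. Moreover, $\mathcal{M}_{3,3}$ and $\operatorname{RBM}_{3,2}$ contain exactly the same strictly positive distributions.
   Context: A distribution of three binary random variables is a $2\times2\times2$ tensor $p=(p_{ijk})_{i,j,k\in\{0,1\}}$ with nonnegative entries summing to $1$; the set of these is the simplex $\Delta_7$. For $a,b,c\in\mathbb{R}^2_{\ge0}$, $a\otimes b\otimes c$ is the tensor with entries $a_ib_jc_k$. $\mathcal{M}_{3,3}$ is the set of $p\in\Delta_7$ that are a sum of three tensors of the form $a\otimes b\otimes c$ with $a,b,c\in\mathbb{R}^2_{\ge0}$ (nonnegative rank at most $3$). $\operatorname{RBM}_{3,2}$ is the set of $p\in\Delta_7$ of the form $p=(a_1\otimes b_1\otimes c_1+d_1\otimes e_1\otimes f_1)*(a_2\otimes b_2\otimes c_2+d_2\otimes e_2\otimes f_2)$ with all vectors in $\mathbb{R}^2_{\ge0}$, where $*$ is the entrywise (Hadamard) product. *)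

(* Defs.v *)
From Stdlib Require Import Reals.
Open Scope R_scope.

(* A 2x2x2 tensor, indexed by bool = {0,1}. *)
Definition tensor := bool -> bool -> bool -> R.

Definition nonneg2 (a : bool -> R) : Prop := forall i, 0 <= a i.

Definition outer3 (a b c : bool -> R) : tensor := fun i j k => a i * b j * c k.

Definition tsum (p : tensor) : R :=
  p false false false + p false false true + p false true false + p false true true +
  p true false false + p true false true + p true true false + p true true true.

Definition in_simplex (p : tensor) : Prop :=
  (forall i j k, 0 <= p i j k) /\ tsum p = 1.

Definition in_M33 (p : tensor) : Prop :=
  in_simplex p /\
  exists a1 b1 c1 a2 b2 c2 a3 b3 c3 : bool -> R,
    nonneg2 a1 /\ nonneg2 b1 /\ nonneg2 c1 /\
    nonneg2 a2 /\ nonneg2 b2 /\ nonneg2 c2 /\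
    nonneg2 a3 /\ nonneg2 b3 /\ nonneg2 c3 /\
    forall i j k, p i j k = outer3 a1 b1 c1 i j k + outer3 a2 b2 c2 i j k + outer3 a3 b3 c3 i j k.

Definition in_RBM32 (p : tensor) : Prop :=
  in_simplex p /\
  exists a1 b1 c1 d1 e1 f1 a2 b2 c2 d2 e2 f2 : bool -> R,
    nonneg2 a1 /\ nonneg2 b1 /\ nonneg2 c1 /\ nonneg2 d1 /\ nonneg2 e1 /\ nonneg2 f1 /\
    nonneg2 a2 /\ nonneg2 b2 /\ nonneg2 c2 /\ nonneg2 d2 /\ nonneg2 e2 /\ nonneg2 f2 /\
    forall i j k, p i j k =
      (outer3 a1 b1 c1 i j k + outer3 d1 e1 f1 i j k) *
      (outer3 a2 b2 c2 i j k + outer3 d2 e2 f2 i j k).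

(* topological closure of S within Delta_7 (Euclidean topology on R^8,
   expressed with the equivalent max-norm) *)
Definition in_closure (S : tensor -> Prop) (p : tensor) : Prop :=
  in_simplex p /\
  forall eps, 0 < eps ->
    exists q, S q /\ forall i j k, Rabs (p i j k - q i j k) < eps.

Definition strictly_positive (p : tensor) : Prop := forall i j k, 0 < p i j k.

(* Main.v *)
Require Import Defs.
From Stdlib Require Import Reals Lra Psatz Classical.
Open Scope R_scope.

Definition M33ex (p : tensor) : Prop :=
  exists a1 b1 c1 a2 b2 c2 a3 b3 c3 : bool -> R,
    nonneg2 a1 /\ nonneg2 b1 /\ nonneg2 c1 /\
    nonneg2 a2 /\ nonneg2 b2 /\ nonneg2 c2 /\
    nonneg2 a3 /\ nonneg2 b3 /\ nonneg2 c3 /\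
    forall i j k, p i j k = outer3 a1 b1 c1 i j k + outer3 a2 b2 c2 i j k + outer3 a3 b3 c3 i j k.

Definition RBMex (p : tensor) : Prop :=
  exists a1 b1 c1 d1 e1 f1 a2 b2 c2 d2 e2 f2 : bool -> R,
    nonneg2 a1 /\ nonneg2 b1 /\ nonneg2 c1 /\ nonneg2 d1 /\ nonneg2 e1 /\ nonneg2 f1 /\
    nonneg2 a2 /\ nonneg2 b2 /\ nonneg2 c2 /\ nonneg2 d2 /\ nonneg2 e2 /\ nonneg2 f2 /\
    forall i j k, p i j k =
      (outer3 a1 b1 c1 i j k + outer3 d1 e1 f1 i j k) *
      (outer3 a2 b2 c2 i j k + outer3 d2 e2 f2 i j k).

Lemma in_M33_iff p : in_M33 p <-> in_simplex p /\ M33ex p.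
Proof. reflexivity. Qed.
Lemma in_RBM_iff p : in_RBM32 p <-> in_simplex p /\ RBMex p.
Proof. reflexivity. Qed.

Definition sw12 (p : tensor) : tensor := fun i j k => p j i k.
Definition sw13 (p : tensor) : tensor := fun i j k => p k j i.
Definition fl3 (p : tensor) : tensor := fun i j k => p i j (negb k).

Definition nonnegT (p : tensor) := forall i j k, 0 <= p i j k.

Definition Dt (p : tensor) (i : bool) :=
  p i false false * p i true true - p i false true * p i true false.
Definition f1 p := Dt p false * Dt p true.
Definition f2 p := f1 (sw12 p).
Definition f3 p := f1 (sw13 p).

Definition ext (p q : tensor) := forall i j k, p i j k = q i j k.

Lemma M33ex_ext p q : ext p q -> M33ex p -> M33ex q.
Proof.
  intros E (a1&b1&c1&a2&b2&c2&a3&b3&c3&H1&H2&H3&H4&H5&H6&H7&H8&H9&H).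
  exists a1,b1,c1,a2,b2,c2,a3,b3,c3; repeat split; auto.
  intros; rewrite <- E; auto.
Qed.
Lemma RBMex_ext p q : ext p q -> RBMex p -> RBMex q.
Proof.
  intros E (a1&b1&c1&d1&e1&g1&a2&b2&c2&d2&e2&g2&H1&H2&H3&H4&H5&H6&H7&H8&H9&H10&H11&H12&H).
  exists a1,b1,c1,d1,e1,g1,a2,b2,c2,d2,e2,g2; repeat split; auto.
  intros; rewrite <- E; auto.
Qed.

Lemma M33ex_sw12 p : M33ex p -> M33ex (sw12 p).
Proof.
  intros (a1&b1&c1&a2&b2&c2&a3&b3&c3&H1&H2&H3&H4&H5&H6&H7&H8&H9&H).
  exists b1,a1,c1,b2,a2,c2,b3,a3,c3; repeat split; auto.
  intros; unfold sw12; rewrite H; unfold outer3; ring.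
Qed.
Lemma M33ex_sw13 p : M33ex p -> M33ex (sw13 p).
Proof.
  intros (a1&b1&c1&a2&b2&c2&a3&b3&c3&H1&H2&H3&H4&H5&H6&H7&H8&H9&H).
  exists c1,b1,a1,c2,b2,a2,c3,b3,a3; repeat split; auto.
  intros; unfold sw13; rewrite H; unfold outer3; ring.
Qed.
Lemma M33ex_fl3 p : M33ex p -> M33ex (fl3 p).
Proof.
  intros (a1&b1&c1&a2&b2&c2&a3&b3&c3&H1&H2&H3&H4&H5&H6&H7&H8&H9&H).
  exists a1,b1,(fun k => c1 (negb k)),a2,b2,(fun k => c2 (negb k)),a3,b3,(fun k => c3 (negb k));
  repeat split; auto; try (intro; auto).
  intros; unfold fl3; rewrite H; unfold outer3; ring.
Qed.
Lemma RBMex_sw12 p : RBMex p -> RBMex (sw12 p).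
Proof.
  intros (a1&b1&c1&d1&e1&g1&a2&b2&c2&d2&e2&g2&H1&H2&H3&H4&H5&H6&H7&H8&H9&H10&H11&H12&H).
  exists b1,a1,c1,e1,d1,g1,b2,a2,c2,e2,d2,g2; repeat split; auto.
  intros; unfold sw12; rewrite H; unfold outer3; ring.
Qed.
Lemma RBMex_sw13 p : RBMex p -> RBMex (sw13 p).
Proof.
  intros (a1&b1&c1&d1&e1&g1&a2&b2&c2&d2&e2&g2&H1&H2&H3&H4&H5&H6&H7&H8&H9&H10&H11&H12&H).
  exists c1,b1,a1,g1,e1,d1,c2,b2,a2,g2,e2,d2; repeat split; auto.
  intros; unfold sw13; rewrite H; unfold outer3; ring.
Qed.
Lemma RBMex_fl3 p : RBMex p -> RBMex (fl3 p).
Proof.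
  intros (a1&b1&c1&d1&e1&g1&a2&b2&c2&d2&e2&g2&H1&H2&H3&H4&H5&H6&H7&H8&H9&H10&H11&H12&H).
  exists a1,b1,(fun k => c1 (negb k)),d1,e1,(fun k => g1 (negb k)),
         a2,b2,(fun k => c2 (negb k)),d2,e2,(fun k => g2 (negb k));
  repeat split; auto; try (intro; auto).
  intros; unfold fl3; rewrite H; unfold outer3; ring.
Qed.

Lemma ext_sw12 p : ext (sw12 (sw12 p)) p.
Proof. intros i j k; reflexivity. Qed.
Lemma ext_sw13 p : ext (sw13 (sw13 p)) p.
Proof. intros i j k; reflexivity. Qed.
Lemma ext_fl3 p : ext (fl3 (fl3 p)) p.
Proof. intros i j k; unfold fl3; rewrite Bool.negb_involutive; reflexivity. Qed.

Lemma tsum_sw12 p : tsum (sw12 p) = tsum p.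
Proof. unfold tsum, sw12; ring. Qed.
Lemma tsum_sw13 p : tsum (sw13 p) = tsum p.
Proof. unfold tsum, sw13; ring. Qed.
Lemma tsum_fl3 p : tsum (fl3 p) = tsum p.
Proof. unfold tsum, fl3; simpl; ring. Qed.

Lemma Dt_fl3 p i : Dt (fl3 p) i = - Dt p i.
Proof. unfold Dt, fl3; simpl; ring. Qed.

Lemma prod_cases x y : 0 <= x * y -> (0 <= x /\ 0 <= y) \/ (x <= 0 /\ y <= 0).
Proof.
  intros H. destruct (Rle_dec 0 x) as [Hx|Hx]; destruct (Rle_dec 0 y) as [Hy|Hy].
  - left; auto.
  - destruct (Req_dec x 0) as [->|Hx0]; [right; lra|].
    exfalso; nra.
  - destruct (Req_dec y 0) as [->|Hy0]; [right; lra|].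
    exfalso; nra.
  - right; lra.
Qed.

Lemma dir_reduce (H Q : tensor -> Prop) :
  (forall p q, ext p q -> Q p -> Q q) ->
  (forall p, H p -> H (sw12 p)) -> (forall p, H p -> H (sw13 p)) -> (forall p, H p -> H (fl3 p)) ->
  (forall p, Q p -> Q (sw12 p)) -> (forall p, Q p -> Q (sw13 p)) -> (forall p, Q p -> Q (fl3 p)) ->
  (forall p, H p -> 0 <= Dt p false -> 0 <= Dt p true -> Q p) ->
  forall p, H p -> (0 <= f1 p \/ 0 <= f2 p \/ 0 <= f3 p) -> Q p.
Proof.
  intros Qe H12 H13 Hf Q12 Q13 Qf base.
  assert (B1 : forall p, H p -> 0 <= f1 p -> Q p).
  { intros p Hp Hf1. unfold f1 in Hf1. destruct (prod_cases _ _ Hf1) as [[A B]|[A B]].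
    - apply base; auto.
    - apply (Qe (fl3 (fl3 p))); [apply ext_fl3|]. apply Qf. apply base; auto;
      rewrite Dt_fl3; lra. }
  intros p Hp [F|[F|F]].
  - apply B1; auto.
  - apply (Qe (sw12 (sw12 p))); [apply ext_sw12|]. apply Q12, B1; auto.
  - apply (Qe (sw13 (sw13 p))); [apply ext_sw13|]. apply Q13, B1; auto.
Qed.
Lemma rank1 q00 q01 q10 q11 :
  0 <= q00 -> 0 <= q01 -> 0 <= q10 -> 0 <= q11 -> q00 * q11 = q01 * q10 ->
  exists u0 u1 v0 v1, 0 <= u0 /\ 0 <= u1 /\ 0 <= v0 /\ 0 <= v1 /\
    q00 = u0 * v0 /\ q01 = u0 * v1 /\ q10 = u1 * v0 /\ q11 = u1 * v1.
Proof.
  intros H0 H1 H2 H3 E.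
  destruct (Req_dec (q00 + q01) 0) as [Z|NZ].
  - exists 0, 1, q10, q11. repeat split; lra.
  - assert (P : 0 < q00 + q01) by lra.
    exists 1, ((q10 + q11) / (q00 + q01)), q00, q01.
    repeat split; try lra.
    + apply Rmult_le_pos; [lra| left; apply Rinv_0_lt_compat; lra].
    + field_simplify; [|lra]. apply Rmult_eq_reg_r with (q00 + q01); [|lra].
      field_simplify; [|lra]. nra.
    + field_simplify; [|lra]. apply Rmult_eq_reg_r with (q00 + q01); [|lra].
      field_simplify; [|lra]. nra.
Qed.

Lemma sliceA a b c d :
  0 <= a -> 0 <= b -> 0 <= c -> 0 <= d -> 0 <= a * d - b * c ->
  exists x u0 u1 v0 v1, 0 <= x <= a /\ 0 <= u0 /\ 0 <= u1 /\ 0 <= v0 /\ 0 <= v1 /\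
    a = x + u0 * v0 /\ b = u0 * v1 /\ c = u1 * v0 /\ d = u1 * v1.
Proof.
  intros Ha Hb Hc Hd Hdet.
  destruct (Req_dec d 0) as [Z|NZ].
  - subst d. assert (b * c = 0) by nra.
    destruct (rank1 a b c 0) as (u0&u1&v0&v1&?&?&?&?&E1&E2&E3&E4); try lra.
    exists 0, u0, u1, v0, v1. repeat split; lra.
  - assert (Pd : 0 < d) by lra.
    set (x := (a * d - b * c) / d).
    assert (Hx0 : 0 <= x) by (unfold x; apply Rmult_le_pos; [lra| left; apply Rinv_0_lt_compat; lra]).
    assert (Hxa : a - x = b * c / d) by (unfold x; field; lra).
    assert (Hq : 0 <= b * c / d) by (apply Rmult_le_pos; [nra| left; apply Rinv_0_lt_compat; lra]).
    destruct (rank1 (a - x) b c d) as (u0&u1&v0&v1&?&?&?&?&E1&E2&E3&E4); try lra.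
    { rewrite Hxa. field. lra. }
    exists x, u0, u1, v0, v1. repeat split; lra.
Qed.

Definition e0v : bool -> R := fun i => if i then 0 else 1.
Definition e1v : bool -> R := fun i => if i then 1 else 0.
Definition onev : bool -> R := fun _ => 1.
Definition mk (x0 x1 : R) : bool -> R := fun i => if i then x1 else x0.

Lemma nonneg_e0 : nonneg2 e0v. Proof. intros [|]; simpl; lra. Qed.
Lemma nonneg_e1 : nonneg2 e1v. Proof. intros [|]; simpl; lra. Qed.
Lemma nonneg_one : nonneg2 onev. Proof. intros [|]; unfold onev; lra. Qed.
Lemma nonneg_mk x0 x1 : 0 <= x0 -> 0 <= x1 -> nonneg2 (mk x0 x1).
Proof. intros; intros [|]; simpl; lra. Qed.

Lemma LA p : nonnegT p -> 0 <= Dt p false -> 0 <= Dt p true -> M33ex p.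
Proof.
  intros Hp D0 D1. unfold Dt in *.
  destruct (sliceA (p false false false) (p false false true) (p false true false) (p false true true))
    as (x0&u00&u01&v00&v01&Hx0&?&?&?&?&E1&E2&E3&E4); try apply Hp; try lra.
  destruct (sliceA (p true false false) (p true false true) (p true true false) (p true true true))
    as (x1&u10&u11&v10&v11&Hx1&?&?&?&?&F1&F2&F3&F4); try apply Hp; try lra.
  exists (mk x0 x1), e0v, e0v, e0v, (mk u00 u01), (mk v00 v01), e1v, (mk u10 u11), (mk v10 v11).
  repeat split; try apply nonneg_e0; try apply nonneg_e1; try (apply nonneg_mk; lra).
  intros [|] [|] [|]; unfold outer3, mk, e0v, e1v; simpl; lra.
Qed.

Lemma special_RBM (w m n U0 V0 U1 V1 : bool -> R) (q : tensor) :
  nonneg2 w -> (forall j, 0 < m j) -> (forall k, 0 < n k) ->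
  nonneg2 U0 -> nonneg2 V0 -> nonneg2 U1 -> nonneg2 V1 ->
  (forall i j k, q i j k = w i * m j * n k + (if i then 0 else U0 j * V0 k)
                             + (if i then U1 j * V1 k else 0)) ->
  RBMex q.
Proof.
  intros Hw Hm Hn HU0 HV0 HU1 HV1 Hq.
  assert (Hm' : nonneg2 m) by (intro j; left; auto).
  assert (Hn' : nonneg2 n) by (intro j; left; auto).
  assert (mf := Hm false); assert (mt := Hm true); assert (nf := Hn false); assert (nt := Hn true).
  assert (Hdiv : forall x y, 0 <= x -> 0 < y -> 0 <= x / y)
    by (intros; apply Rmult_le_pos; [lra| left; apply Rinv_0_lt_compat; lra]).
  destruct (Rlt_dec 0 (w false)) as [W0|W0].
  - exists w, m, n, e1v, U1, V1, onev, onev, onev,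
      (mk (1 / w false) 0), (fun j => U0 j / m j), (fun k => V0 k / n k).
    repeat split; auto; try apply nonneg_e1; try apply nonneg_one.
    + apply nonneg_mk; [apply Hdiv|]; lra.
    + intro j; apply Hdiv; auto.
    + intro j; apply Hdiv; auto.
    + intros [|] [|] [|]; rewrite Hq; unfold outer3, mk, e1v, onev; simpl; field; lra.
  - assert (w false = 0) by (specialize (Hw false); lra).
    destruct (Rlt_dec 0 (w true)) as [W1|W1].
    + exists w, m, n, e0v, U0, V0, onev, onev, onev,
        (mk 0 (1 / w true)), (fun j => U1 j / m j), (fun k => V1 k / n k).
      repeat split; auto; try apply nonneg_e0; try apply nonneg_one.
      * apply nonneg_mk; [|apply Hdiv]; lra.
      * intro j; apply Hdiv; auto.
      * intro j; apply Hdiv; auto.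
      * intros [|] [|] [|]; rewrite Hq; unfold outer3, mk, e0v, onev; simpl; field; lra.
    + assert (w true = 0) by (specialize (Hw true); lra).
      exists e0v, U0, V0, e1v, U1, V1, onev, onev, onev, onev, (fun _ => 0), (fun _ => 0).
      repeat split; auto; try apply nonneg_e0; try apply nonneg_e1; try apply nonneg_one;
        try (intro; lra).
      intros [|] [|] [|]; rewrite Hq; unfold outer3, e0v, e1v, onev; simpl;
        repeat match goal with H : w _ = 0 |- _ => rewrite H end; ring.
Qed.

Definition good (a b c d e : R) :=
  0 < e /\ e <= 1 /\ e * (b + c) <= d / 2 /\ a * (b + c) * e <= b * c /\
  a * e <= b /\ a * e <= c /\ a * e <= d.

Lemma good_mono a b c d e e' :
  0 < a -> 0 < b -> 0 < c -> 0 < d ->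
  good a b c d e -> 0 < e' -> e' <= e -> good a b c d e'.
Proof.
  intros Ha Hb Hc Hd (G1&G2&G3&G4&G5&G6&G7) H1 H2.
  assert (X : 0 <= e - e') by lra.
  unfold good; repeat split; try lra.
  - assert (0 <= (e - e') * (b + c)) by (apply Rmult_le_pos; lra). nra.
  - assert (0 <= a * (b + c) * (e - e')) by (apply Rmult_le_pos; [apply Rmult_le_pos|]; lra). nra.
  - assert (0 <= a * (e - e')) by (apply Rmult_le_pos; lra). nra.
  - assert (0 <= a * (e - e')) by (apply Rmult_le_pos; lra). nra.
  - assert (0 <= a * (e - e')) by (apply Rmult_le_pos; lra). nra.
Qed.

Lemma le_div_mul e X y : 0 < y -> e <= X / y -> e * y <= X.
Proof.
  intros Hy H. apply Rmult_le_compat_r with (r := y) in H; [|lra].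
  replace (X / y * y) with X in H by (field; lra). lra.
Qed.

Lemma good_ex a b c d : 0 < a -> 0 < b -> 0 < c -> 0 < d -> exists e, good a b c d e.
Proof.
  intros Ha Hb Hc Hd.
  set (e := Rmin 1 (Rmin (d / (2 * (b + c))) (Rmin (b * c / (a * (b + c)))
              (Rmin (b / a) (Rmin (c / a) (d / a)))))).
  assert (pos : forall x y, 0 < x -> 0 < y -> 0 < x / y)
    by (intros; apply Rmult_lt_0_compat; [lra| apply Rinv_0_lt_compat; lra]).
  exists e. unfold good.
  assert (Pe : 0 < e).
  { unfold e. repeat apply Rmin_glb_lt; try lra; apply pos; nra. }
  assert (E1 : e <= 1) by (unfold e; apply Rmin_l).
  assert (E2 : e <= d / (2 * (b + c))) by (unfold e; eapply Rle_trans; [apply Rmin_r|]; apply Rmin_l).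
  assert (E3 : e <= b * c / (a * (b + c))) by
    (unfold e; eapply Rle_trans; [apply Rmin_r|]; eapply Rle_trans; [apply Rmin_r|]; apply Rmin_l).
  assert (E4 : e <= b / a) by
    (unfold e; do 3 (eapply Rle_trans; [apply Rmin_r|]); apply Rmin_l).
  assert (E5 : e <= c / a) by
    (unfold e; do 4 (eapply Rle_trans; [apply Rmin_r|]); apply Rmin_l).
  assert (E6 : e <= d / a) by
    (unfold e; do 5 (eapply Rle_trans; [apply Rmin_r|]); apply Rle_refl).
  apply le_div_mul in E2; [|lra]. apply le_div_mul in E3; [|nra].
  apply le_div_mul in E4; [|lra]. apply le_div_mul in E5; [|lra]. apply le_div_mul in E6; [|lra].
  repeat split; try lra; nra.
Qed.

Lemma sliceD a b c d e :
  0 < a -> 0 < b -> 0 < c -> 0 < d -> 0 <= a * d - b * c -> good a b c d e ->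
  exists x u0 u1 v0 v1, 0 <= x /\ 0 <= u0 /\ 0 <= u1 /\ 0 <= v0 /\ 0 <= v1 /\
    a = x * 1 * 1 + u0 * v0 /\ b = x * 1 * e + u0 * v1 /\
    c = x * e * 1 + u1 * v0 /\ d = x * e * e + u1 * v1.
Proof.
  intros Ha Hb Hc Hd Hdet (G1&G2&G3&G4&G5&G6&G7).
  set (l := d - (b + c) * e + a * e * e).
  assert (Hl : 0 < l) by (unfold l; nra).
  set (x := (a * d - b * c) / l).
  assert (Hx0 : 0 <= x) by (unfold x; apply Rmult_le_pos; [lra| left; apply Rinv_0_lt_compat; lra]).
  assert (Hxl : x * l = a * d - b * c) by (unfold x; field; lra).
  assert (Hxa : x <= a).
  { apply Rmult_le_reg_r with l; [lra|]. rewrite Hxl. unfold l. nra. }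
  destruct (rank1 (a - x) (b - x * e) (c - x * e) (d - x * e * e))
    as (u0&u1&v0&v1&?&?&?&?&E1&E2&E3&E4); try nra.
  { unfold l in Hxl. nra. }
  exists x, u0, u1, v0, v1. repeat split; try lra.
Qed.

Definition mv (e : R) : bool -> R := fun j => if j then e else 1.

Lemma LD p : strictly_positive p -> 0 <= Dt p false -> 0 <= Dt p true -> RBMex p.
Proof.
  intros Hp D0 D1. unfold Dt in *.
  destruct (good_ex (p false false false) (p false false true) (p false true false) (p false true true))
    as [e0 G0]; try apply Hp.
  destruct (good_ex (p true false false) (p true false true) (p true true false) (p true true true))
    as [e1 G1]; try apply Hp.
  set (e := Rmin e0 e1).
  assert (Pe : 0 < e) by (unfold e; destruct G0, G1; apply Rmin_glb_lt; lra).
  assert (G0' : good (p false false false) (p false false true) (p false true false) (p false true true) e)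
    by (eapply good_mono; eauto; apply Rmin_l).
  assert (G1' : good (p true false false) (p true false true) (p true true false) (p true true true) e)
    by (eapply good_mono; eauto; apply Rmin_r).
  destruct (sliceD _ _ _ _ _ (Hp _ _ _) (Hp _ _ _) (Hp _ _ _) (Hp _ _ _) D0 G0')
    as (x0&u00&u01&v00&v01&Hx0&?&?&?&?&E1&E2&E3&E4).
  destruct (sliceD _ _ _ _ _ (Hp _ _ _) (Hp _ _ _) (Hp _ _ _) (Hp _ _ _) D1 G1')
    as (x1&u10&u11&v10&v11&Hx1&?&?&?&?&F1&F2&F3&F4).
  apply (special_RBM (mk x0 x1) (mv e) (mv e) (mk u00 u01) (mk v00 v01) (mk u10 u11) (mk v10 v11));
    try (apply nonneg_mk; lra); try (intros [|]; simpl; lra).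
  intros [|] [|] [|]; unfold mk, mv; simpl; lra.
Qed.
Definition cross (u v : bool -> R) := u false * v true - u true * v false.
Definition ipr (u v : bool -> R) := u false * v true + u true * v false.

Lemma f1_ext p q : ext p q -> f1 p = f1 q.
Proof. intros E; unfold f1, Dt; rewrite !E; reflexivity. Qed.

Ltac posR := repeat (match goal with
  | |- 0 <= _ + _ => apply Rplus_le_le_0_compat
  | |- 0 <= _ * _ => apply Rmult_le_pos
  | |- 0 <= ipr _ _ => unfold ipr
  end); auto; try lra.

Lemma rbm_core (A1 A2 A3 B1 B2 B3 C1 C2 C3 D1 D2 D3 : bool -> R) :
  nonneg2 A1 -> nonneg2 A2 -> nonneg2 A3 -> nonneg2 B1 -> nonneg2 B2 -> nonneg2 B3 ->
  nonneg2 C1 -> nonneg2 C2 -> nonneg2 C3 -> nonneg2 D1 -> nonneg2 D2 -> nonneg2 D3 ->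
  0 <= (cross A2 B2 * cross A3 B3) * (cross C2 D2 * cross C3 D3) ->
  0 <= f1 (fun i j k => (A1 i * A2 j * A3 k + B1 i * B2 j * B3 k) *
                        (C1 i * C2 j * C3 k + D1 i * D2 j * D3 k)).
Proof.
  intros HA1 HA2 HA3 HB1 HB2 HB3 HC1 HC2 HC3 HD1 HD2 HD3 Hab.
  set (al := cross A2 B2 * cross A3 B3). set (be := cross C2 D2 * cross C3 D3).
  set (U := fun i => 2 * (A1 i * C1 i * B1 i * C1 i * (C2 false * C2 true * C3 false * C3 true))
     + 2 * (A1 i * D1 i * B1 i * D1 i * (D2 false * D2 true * D3 false * D3 true))
     + A1 i * B1 i * C1 i * D1 i * ipr C2 D2 * ipr C3 D3).
  set (V := fun i => 2 * (A1 i * C1 i * A1 i * D1 i * (A2 false * A2 true * A3 false * A3 true))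
     + 2 * (B1 i * C1 i * B1 i * D1 i * (B2 false * B2 true * B3 false * B3 true))
     + A1 i * B1 i * C1 i * D1 i * ipr A2 B2 * ipr A3 B3).
  assert (Id : forall i, 2 * Dt (fun i j k => (A1 i * A2 j * A3 k + B1 i * B2 j * B3 k) *
                        (C1 i * C2 j * C3 k + D1 i * D2 j * D3 k)) i = U i * al + V i * be).
  { intro i. unfold Dt, U, V, al, be, cross, ipr. ring. }
  assert (PU : forall i, 0 <= U i) by (intro i; unfold U; posR).
  assert (PV : forall i, 0 <= V i) by (intro i; unfold V; posR).
  unfold f1.
  match goal with |- 0 <= ?X * ?Y => assert (E : 4 * (X * Y) = (U false * al + V false * be) * (U true * al + V true * be)) end.
  { rewrite <- !Id. ring. }
  assert (0 <= (U false * al + V false * be) * (U true * al + V true * be)).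
  { replace ((U false * al + V false * be) * (U true * al + V true * be)) with
      (U false * U true * (al * al) + (U false * V true + V false * U true) * (al * be)
       + V false * V true * (be * be)) by ring.
    assert (0 <= al * al) by nra. assert (0 <= be * be) by nra.
    assert (0 <= U false * U true) by (apply Rmult_le_pos; auto).
    assert (0 <= V false * V true) by (apply Rmult_le_pos; auto).
    assert (0 <= U false * V true + V false * U true) by
      (apply Rplus_le_le_0_compat; apply Rmult_le_pos; auto).
    assert (0 <= U false * U true * (al * al)) by (apply Rmult_le_pos; auto).
    assert (0 <= (U false * V true + V false * U true) * (al * be)) by (apply Rmult_le_pos; auto).
    assert (0 <= V false * V true * (be * be)) by (apply Rmult_le_pos; auto).
    lra. }
  lra.
Qed.

Lemma pig x y z : 0 <= y * z \/ 0 <= x * z \/ 0 <= x * y.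
Proof.
  destruct (Rle_dec 0 x); destruct (Rle_dec 0 y); destruct (Rle_dec 0 z).
  all: first [left; nra | right; left; nra | right; right; nra].
Qed.

Lemma LC p : RBMex p -> 0 <= f1 p \/ 0 <= f2 p \/ 0 <= f3 p.
Proof.
  intros (a1&b1&c1&d1&e1&g1&a2&b2&c2&d2&e2&g2&H1&H2&H3&H4&H5&H6&H7&H8&H9&H10&H11&H12&H).
  destruct (pig (cross a1 d1 * cross a2 d2) (cross b1 e1 * cross b2 e2) (cross c1 g1 * cross c2 g2))
    as [Z|[Z|Z]].
  - left. erewrite f1_ext; [apply (rbm_core a1 b1 c1 d1 e1 g1 a2 b2 c2 d2 e2 g2); auto|].
    + replace (cross b1 e1 * cross c1 g1 * (cross b2 e2 * cross c2 g2)) with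
        (cross b1 e1 * cross b2 e2 * (cross c1 g1 * cross c2 g2)) by ring. auto.
    + intros i j k. rewrite H. unfold outer3. ring.
  - right; left. unfold f2. erewrite f1_ext; [apply (rbm_core b1 a1 c1 e1 d1 g1 b2 a2 c2 e2 d2 g2); auto|].
    + replace (cross a1 d1 * cross c1 g1 * (cross a2 d2 * cross c2 g2)) with
        (cross a1 d1 * cross a2 d2 * (cross c1 g1 * cross c2 g2)) by ring. auto.
    + intros i j k. unfold sw12. rewrite H. unfold outer3. ring.
  - right; right. unfold f3. erewrite f1_ext; [apply (rbm_core c1 b1 a1 g1 e1 d1 c2 b2 a2 g2 e2 d2); auto|].
    + replace (cross b1 e1 * cross a1 d1 * (cross b2 e2 * cross a2 d2)) with
        (cross a1 d1 * cross a2 d2 * (cross b1 e1 * cross b2 e2)) by ring. auto.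
    + intros i j k. unfold sw13. rewrite H. unfold outer3. ring.
Qed.
Definition T1 (x12 x13 x23 : R) := 0 <= - x12 * x23 /\ 0 <= - x12 * x13 /\ 0 <= x23 * x13.
Definition T2 (x12 x13 x23 : R) := 0 <= x12 * x13 /\ 0 <= x12 * x23 /\ 0 <= x13 * x23.
Definition T3 (x12 x13 x23 : R) := 0 <= x13 * x12 /\ 0 <= - x13 * x23 /\ 0 <= - x12 * x23.
Definition compat (k1 k2 k3 : R) := 0 <= k1 * k2 /\ 0 <= k1 * k3 /\ 0 <= k2 * k3.

Definition S3 (a1 b1 c1 a2 b2 c2 a3 b3 c3 : bool -> R) : tensor :=
  fun i j k => a1 i * b1 j * c1 k + a2 i * b2 j * c2 k + a3 i * b3 j * c3 k.

Lemma cross_anti u v : cross v u = - cross u v.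
Proof. unfold cross; ring. Qed.

Lemma gen3 w1 w2 w3 v1 v2 v3 k1 k2 k3 :
  0 <= w1 -> 0 <= w2 -> 0 <= w3 -> 0 <= v1 -> 0 <= v2 -> 0 <= v3 -> compat k1 k2 k3 ->
  0 <= (w1 * k1 + w2 * k2 + w3 * k3) * (v1 * k1 + v2 * k2 + v3 * k3).
Proof.
  intros H1 H2 H3 H4 H5 H6 (C1&C2&C3).
  replace ((w1 * k1 + w2 * k2 + w3 * k3) * (v1 * k1 + v2 * k2 + v3 * k3)) with
    (w1 * v1 * (k1 * k1) + w2 * v2 * (k2 * k2) + w3 * v3 * (k3 * k3)
     + (w1 * v2 + w2 * v1) * (k1 * k2) + (w1 * v3 + w3 * v1) * (k1 * k3)
     + (w2 * v3 + w3 * v2) * (k2 * k3)) by ring.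
  assert (0 <= k1 * k1) by nra. assert (0 <= k2 * k2) by nra. assert (0 <= k3 * k3) by nra.
  repeat apply Rplus_le_le_0_compat; apply Rmult_le_pos; auto;
    try apply Rmult_le_pos; auto; try apply Rplus_le_le_0_compat; apply Rmult_le_pos; auto.
Qed.

Lemma Dt_S3 a1 b1 c1 a2 b2 c2 a3 b3 c3 i :
  Dt (S3 a1 b1 c1 a2 b2 c2 a3 b3 c3) i =
  a1 i * a2 i * (cross b1 b2 * cross c1 c2) + a1 i * a3 i * (cross b1 b3 * cross c1 c3)
  + a2 i * a3 i * (cross b2 b3 * cross c2 c3).
Proof. unfold Dt, S3, cross; ring. Qed.

Lemma Kf1 a1 b1 c1 a2 b2 c2 a3 b3 c3 :
  nonneg2 a1 -> nonneg2 a2 -> nonneg2 a3 ->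
  compat (cross b1 b2 * cross c1 c2) (cross b1 b3 * cross c1 c3) (cross b2 b3 * cross c2 c3) ->
  0 <= f1 (S3 a1 b1 c1 a2 b2 c2 a3 b3 c3).
Proof.
  intros A1 A2 A3 C. unfold f1. rewrite !Dt_S3.
  apply gen3; auto; apply Rmult_le_pos; auto.
Qed.

Lemma shared_compat x12 x13 x23 y12 y13 y23 :
  (T1 x12 x13 x23 /\ T1 y12 y13 y23) \/ (T2 x12 x13 x23 /\ T2 y12 y13 y23) \/
  (T3 x12 x13 x23 /\ T3 y12 y13 y23) -> compat (x12 * y12) (x13 * y13) (x23 * y23).
Proof.
  unfold T1, T2, T3, compat.
  intros [((A1&A2&A3)&(B1&B2&B3))|[((A1&A2&A3)&(B1&B2&B3))|((A1&A2&A3)&(B1&B2&B3))]].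
  - repeat split.
    + replace (x12 * y12 * (x13 * y13)) with ((- x12 * x13) * (- y12 * y13)) by ring.
      apply Rmult_le_pos; auto.
    + replace (x12 * y12 * (x23 * y23)) with ((- x12 * x23) * (- y12 * y23)) by ring.
      apply Rmult_le_pos; auto.
    + replace (x13 * y13 * (x23 * y23)) with ((x23 * x13) * (y23 * y13)) by ring.
      apply Rmult_le_pos; auto.
  - repeat split.
    + replace (x12 * y12 * (x13 * y13)) with ((x12 * x13) * (y12 * y13)) by ring.
      apply Rmult_le_pos; auto.
    + replace (x12 * y12 * (x23 * y23)) with ((x12 * x23) * (y12 * y23)) by ring.
      apply Rmult_le_pos; auto.
    + replace (x13 * y13 * (x23 * y23)) with ((x13 * x23) * (y13 * y23)) by ring.
      apply Rmult_le_pos; auto.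
  - repeat split.
    + replace (x12 * y12 * (x13 * y13)) with ((x13 * x12) * (y13 * y12)) by ring.
      apply Rmult_le_pos; auto.
    + replace (x12 * y12 * (x23 * y23)) with ((- x12 * x23) * (- y12 * y23)) by ring.
      apply Rmult_le_pos; auto.
    + replace (x13 * y13 * (x23 * y23)) with ((- x13 * x23) * (- y13 * y23)) by ring.
      apply Rmult_le_pos; auto.
Qed.

Lemma cramer1 (v1 v2 v3 : bool -> R) :
  nonneg2 v1 -> nonneg2 v2 -> nonneg2 v3 -> cross v2 v3 = 0 ->
  0 <= cross v1 v2 * cross v1 v3.
Proof.
  intros H1 H2 H3 E.
  destruct (Rle_dec 0 (cross v1 v2 * cross v1 v3)) as [|N]; auto. exfalso.
  set (x := cross v1 v2) in *. set (y := cross v1 v3) in *.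
  assert (C : forall k, y * v2 k = x * v3 k).
  { intro k. assert (Z : cross v2 v3 * v1 k - y * v2 k + x * v3 k = 0)
      by (unfold x, y, cross; destruct k; ring).
    rewrite E in Z. lra. }
  assert (Z2 : forall k, v2 k = 0 /\ v3 k = 0).
  { intro k. specialize (C k). specialize (H2 k). specialize (H3 k).
    assert (x * y * v2 k = x * x * v3 k) by (transitivity (x * (y * v2 k)); [ring| rewrite C; ring]).
    assert (0 <= x * x * v3 k) by (apply Rmult_le_pos; nra).
    assert (x * y * v2 k <= 0) by nra.
    assert (x * x * v3 k = 0) by lra.
    assert (x <> 0) by (intro; subst; nra).
    assert (y <> 0) by (intro; nra).
    split; nra. }
  assert (x = 0).
  { unfold x, cross. destruct (Z2 false) as [A1 B1]. destruct (Z2 true) as [A2 B2].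
    rewrite A1, A2. ring. }
  nra.
Qed.

Lemma cramer2 (v1 v2 v3 : bool -> R) :
  nonneg2 v1 -> nonneg2 v2 -> nonneg2 v3 -> cross v1 v3 = 0 ->
  0 <= - cross v1 v2 * cross v2 v3.
Proof.
  intros H1 H2 H3 E.
  destruct (Rle_dec 0 (- cross v1 v2 * cross v2 v3)) as [|N]; auto. exfalso.
  set (x := cross v1 v2) in *. set (z := cross v2 v3) in *.
  assert (C : forall k, z * v1 k = - x * v3 k).
  { intro k. assert (Z : z * v1 k - cross v1 v3 * v2 k + x * v3 k = 0)
      by (unfold x, z, cross; destruct k; ring).
    rewrite E in Z. lra. }
  assert (Z2 : forall k, v1 k = 0 /\ v3 k = 0).
  { intro k. specialize (C k). specialize (H1 k). specialize (H3 k).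
    assert (z * z * v1 k = - x * z * v3 k) by (transitivity (z * (z * v1 k)); [ring| rewrite C; ring]).
    assert (0 <= z * z * v1 k) by (apply Rmult_le_pos; nra).
    assert (- x * z * v3 k <= 0) by nra.
    assert (z * z * v1 k = 0) by lra.
    assert (z <> 0) by (intro; subst; nra).
    assert (x <> 0) by (intro; nra).
    split; nra. }
  assert (x = 0).
  { unfold x, cross. destruct (Z2 false) as [A1 B1]. destruct (Z2 true) as [A2 B2].
    rewrite A1, A2. ring. }
  nra.
Qed.

Lemma same_sign u v w : 0 <= u * v -> 0 <= u * w -> 0 <= v * w ->
  exists s, s * s = 1 /\ 0 <= s * u /\ 0 <= s * v /\ 0 <= s * w.
Proof.
  intros H1 H2 H3. destruct (Rle_dec 0 (u + v + w)).
  - exists 1. repeat split; try lra.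
    + destruct (Rle_dec 0 u); [lra|]. exfalso. nra.
    + destruct (Rle_dec 0 v); [lra|]. exfalso. nra.
    + destruct (Rle_dec 0 w); [lra|]. exfalso. nra.
  - exists (-1). repeat split; try lra.
    + destruct (Rle_dec u 0); [lra|]. exfalso. nra.
    + destruct (Rle_dec v 0); [lra|]. exfalso. nra.
    + destruct (Rle_dec w 0); [lra|]. exfalso. nra.
Qed.
Lemma imp_pattern (v1 v2 v3 : bool -> R) :
  nonneg2 v1 -> nonneg2 v2 -> nonneg2 v3 ->
  0 < cross v1 v2 * cross v2 v3 -> 0 < - cross v1 v2 * cross v1 v3 -> False.
Proof.
  intros H1 H2 H3 P1 P2.
  set (x := cross v1 v2) in *. set (y := cross v1 v3) in *. set (z := cross v2 v3) in *.
  assert (C : forall k, x * z * v1 k + (- x * y) * v2 k + x * x * v3 k = 0).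
  { intro k. assert (Z : z * v1 k - y * v2 k + x * v3 k = 0)
      by (unfold x, y, z, cross; destruct k; ring).
    transitivity (x * (z * v1 k - y * v2 k + x * v3 k)); [ring| rewrite Z; ring]. }
  assert (Z2 : forall k, v2 k = 0).
  { intro k. specialize (C k). specialize (H1 k). specialize (H2 k). specialize (H3 k).
    assert (0 <= x * z * v1 k) by (apply Rmult_le_pos; lra).
    assert (0 <= x * x * v3 k) by (apply Rmult_le_pos; nra).
    assert (0 <= - x * y * v2 k) by (apply Rmult_le_pos; lra).
    assert (- x * y * v2 k = 0) by lra. nra. }
  assert (x = 0) by (unfold x, cross; rewrite !Z2; ring).
  rewrite H in P1. lra.
Qed.

Lemma types (v1 v2 v3 : bool -> R) :
  nonneg2 v1 -> nonneg2 v2 -> nonneg2 v3 ->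
  T1 (cross v1 v2) (cross v1 v3) (cross v2 v3) \/ T2 (cross v1 v2) (cross v1 v3) (cross v2 v3)
  \/ T3 (cross v1 v2) (cross v1 v3) (cross v2 v3).
Proof.
  intros H1 H2 H3.
  pose proof (imp_pattern v1 v2 v3 H1 H2 H3) as I.
  set (x := cross v1 v2) in *. set (y := cross v1 v3) in *. set (z := cross v2 v3) in *.
  unfold T1, T2, T3.
  destruct (Rtotal_order x 0) as [Hx|[Hx|Hx]]; destruct (Rtotal_order y 0) as [Hy|[Hy|Hy]];
  destruct (Rtotal_order z 0) as [Hz|[Hz|Hz]];
  first [ left; repeat split; nra | right; left; repeat split; nra
        | right; right; repeat split; nra | exfalso; apply I; nra ].
Qed.
Lemma sw12_S3 a1 b1 c1 a2 b2 c2 a3 b3 c3 :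
  ext (sw12 (S3 a1 b1 c1 a2 b2 c2 a3 b3 c3)) (S3 b1 a1 c1 b2 a2 c2 b3 a3 c3).
Proof. intros i j k; unfold sw12, S3; ring. Qed.
Lemma sw13_S3 a1 b1 c1 a2 b2 c2 a3 b3 c3 :
  ext (sw13 (S3 a1 b1 c1 a2 b2 c2 a3 b3 c3)) (S3 c1 b1 a1 c2 b2 a2 c3 b3 a3).
Proof. intros i j k; unfold sw13, S3; ring. Qed.

Lemma pos_of_mult k f : 0 < k -> 0 <= k * f -> 0 <= f.
Proof.
  intros Hk H. destruct (Rle_dec 0 f); auto. exfalso.
  assert (k * f < 0) by (apply Rmult_pos_neg; lra). lra.
Qed.

Lemma core a1 b1 c1 a2 b2 c2 a3 b3 c3 :
  nonneg2 a1 -> nonneg2 b1 -> nonneg2 c1 -> nonneg2 a2 -> nonneg2 b2 -> nonneg2 c2 ->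
  nonneg2 a3 -> nonneg2 b3 -> nonneg2 c3 ->
  T1 (cross a1 a2) (cross a1 a3) (cross a2 a3) -> ~ T2 (cross a1 a2) (cross a1 a3) (cross a2 a3) ->
  T2 (cross b1 b2) (cross b1 b3) (cross b2 b3) -> ~ T1 (cross b1 b2) (cross b1 b3) (cross b2 b3) ->
  T3 (cross c1 c2) (cross c1 c3) (cross c2 c3) ->
  0 <= f1 (S3 a1 b1 c1 a2 b2 c2 a3 b3 c3) \/ 0 <= f2 (S3 a1 b1 c1 a2 b2 c2 a3 b3 c3).
Proof.
  intros A1 B1 C1 A2 B2 C2 A3 B3 C3 TA NTA TB NTB TC.
  assert (Hal : cross a2 a3 <> 0).
  { intro E. apply NTA. pose proof (cramer1 a1 a2 a3 A1 A2 A3 E). unfold T2. rewrite E.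
    repeat split; lra. }
  assert (Hbe : cross b1 b3 <> 0).
  { intro E. apply NTB. pose proof (cramer2 b1 b2 b3 B1 B2 B3 E). unfold T1. rewrite E.
    repeat split; lra. }
  unfold f2. rewrite (f1_ext _ _ (sw12_S3 a1 b1 c1 a2 b2 c2 a3 b3 c3)).
  unfold f1. rewrite !Dt_S3.
  set (x12 := cross a1 a2) in *. set (x13 := cross a1 a3) in *. set (x23 := cross a2 a3) in *.
  set (y12 := cross b1 b2) in *. set (y13 := cross b1 b3) in *. set (y23 := cross b2 b3) in *.
  set (z12 := cross c1 c2) in *. set (z13 := cross c1 c3) in *. set (z23 := cross c2 c3) in *.
  destruct TA as (TA1&TA2&TA3). destruct TB as (TB1&TB2&TB3). destruct TC as (TC1&TC2&TC3).
  destruct (same_sign (- x12) x23 x13) as (sa&Sa&Sa1&Sa2&Sa3); try nra.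
  destruct (same_sign y12 y13 y23) as (sb&Sb&Sb1&Sb2&Sb3); try nra.
  destruct (same_sign z13 z12 (- z23)) as (sc&Sc&Sc1&Sc2&Sc3); try nra.
  set (s := sa * sb * sc).
  assert (Ss : s * s = 1) by (unfold s; transitivity ((sa * sa) * (sb * sb) * (sc * sc)); [ring|];
    rewrite Sa, Sb, Sc; ring).
  assert (F12 : 0 <= - s * (x12 * y12 * z12)).
  { replace (- s * (x12 * y12 * z12)) with ((sa * - x12) * (sb * y12) * (sc * z12)) by (unfold s; ring).
    apply Rmult_le_pos; [apply Rmult_le_pos|]; auto. }
  assert (F13 : 0 <= s * (x13 * y13 * z13)).
  { replace (s * (x13 * y13 * z13)) with ((sa * x13) * (sb * y13) * (sc * z13)) by (unfold s; ring).
    apply Rmult_le_pos; [apply Rmult_le_pos|]; auto. }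
  assert (F23 : 0 <= - s * (x23 * y23 * z23)).
  { replace (- s * (x23 * y23 * z23)) with ((sa * x23) * (sb * y23) * (sc * - z23)) by (unfold s; ring).
    apply Rmult_le_pos; [apply Rmult_le_pos|]; auto. }
  set (E1 := s * (x13 * y13 * z13 - x12 * y12 * z12 + x23 * y23 * z23)).
  set (E2 := - s * (x12 * y12 * z12 + x13 * y13 * z13 + x23 * y23 * z23)).
  assert (Esum : 0 <= E1 \/ 0 <= E2) by (unfold E1, E2; lra).
  destruct Esum as [HE|HE].
  - left.
    assert (FA : 0 <= s * (x13 * y12 * z12)).
    { replace (s * (x13 * y12 * z12)) with ((sa * x13) * (sb * y12) * (sc * z12)) by (unfold s; ring).
      apply Rmult_le_pos; [apply Rmult_le_pos|]; auto. }
    assert (FB : 0 <= s * (- x12 * y13 * z13)).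
    { replace (s * (- x12 * y13 * z13)) with ((sa * - x12) * (sb * y13) * (sc * z13)) by (unfold s; ring).
      apply Rmult_le_pos; [apply Rmult_le_pos|]; auto. }
    assert (Q : forall i, 0 <= s * x23 * (a1 i * a2 i * (y12 * z12) + a1 i * a3 i * (y13 * z13)
                                         + a2 i * a3 i * (y23 * z23))).
    { intro i.
      assert (Id : s * x23 * (a1 i * a2 i * (y12 * z12) + a1 i * a3 i * (y13 * z13)
                                         + a2 i * a3 i * (y23 * z23)) =
                   s * (x13 * y12 * z12) * (a2 i * a2 i) + s * (- x12 * y13 * z13) * (a3 i * a3 i)
                   + E1 * (a2 i * a3 i)).
      { unfold E1, x12, x13, x23; destruct i; unfold cross; ring. }
      rewrite Id. pose proof (A2 i); pose proof (A3 i).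
      repeat apply Rplus_le_le_0_compat; apply Rmult_le_pos; auto; apply Rmult_le_pos; auto. }
    apply (pos_of_mult ((s * x23) * (s * x23))).
    { replace ((s * x23) * (s * x23)) with ((s * s) * (x23 * x23)) by ring. rewrite Ss.
      assert (0 < x23 * x23) by (apply Rsqr_pos_lt; auto). lra. }
    match goal with |- 0 <= _ * (?X * ?Y) =>
      replace ((s * x23) * (s * x23) * (X * Y)) with ((s * x23 * X) * (s * x23 * Y)) by ring end.
    apply Rmult_le_pos; apply Q.
  - right.
    assert (FA : 0 <= - s * (y23 * x12 * z12)).
    { replace (- s * (y23 * x12 * z12)) with ((sb * y23) * (sa * - x12) * (sc * z12)) by (unfold s; ring).
      apply Rmult_le_pos; [apply Rmult_le_pos|]; auto. }
    assert (FB : 0 <= - s * (y12 * x23 * z23)).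
    { replace (- s * (y12 * x23 * z23)) with ((sb * y12) * (sa * x23) * (sc * - z23)) by (unfold s; ring).
      apply Rmult_le_pos; [apply Rmult_le_pos|]; auto. }
    assert (cross a1 a2 = x12) by reflexivity.
    assert (Q : forall j, 0 <= - s * y13 * (b1 j * b2 j * (cross a1 a2 * z12) + b1 j * b3 j * (cross a1 a3 * z13)
                                         + b2 j * b3 j * (cross a2 a3 * z23))).
    { intro j.
      assert (Id : - s * y13 * (b1 j * b2 j * (cross a1 a2 * z12) + b1 j * b3 j * (cross a1 a3 * z13)
                                         + b2 j * b3 j * (cross a2 a3 * z23)) =
                   - s * (y23 * x12 * z12) * (b1 j * b1 j) + - s * (y12 * x23 * z23) * (b3 j * b3 j)
                   + E2 * (b1 j * b3 j)).
      { unfold E2, x12, x13, x23, y12, y13, y23; destruct j; unfold cross; ring. }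
      rewrite Id. pose proof (B1 j); pose proof (B3 j).
      repeat apply Rplus_le_le_0_compat; apply Rmult_le_pos; auto; apply Rmult_le_pos; auto. }
    apply (pos_of_mult ((- s * y13) * (- s * y13))).
    { replace ((- s * y13) * (- s * y13)) with ((s * s) * (y13 * y13)) by ring. rewrite Ss.
      assert (0 < y13 * y13) by (apply Rsqr_pos_lt; auto). lra. }
    match goal with |- 0 <= _ * (?X * ?Y) =>
      replace ((- s * y13) * (- s * y13) * (X * Y)) with ((- s * y13 * X) * (- s * y13 * Y)) by ring end.
    apply Rmult_le_pos; apply Q.
Qed.
Lemma ext_sw12' p q : ext p q -> ext (sw12 p) (sw12 q).
Proof. intros E i j k; unfold sw12; apply E. Qed.
Lemma ext_sw13' p q : ext p q -> ext (sw13 p) (sw13 q).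
Proof. intros E i j k; unfold sw13; apply E. Qed.
Lemma f2_ext p q : ext p q -> f2 p = f2 q.
Proof. intros E; unfold f2; apply f1_ext, ext_sw12', E. Qed.
Lemma f3_ext p q : ext p q -> f3 p = f3 q.
Proof. intros E; unfold f3; apply f1_ext, ext_sw13', E. Qed.


Ltac nrmT a1 a2 a3 := rewrite ?(cross_anti a1 a2), ?(cross_anti a1 a3), ?(cross_anti a2 a3) in *.
Ltac solveT a1 a2 a3 b1 b2 b3 c1 c2 c3 :=
  unfold T1, T2, T3 in *; nrmT a1 a2 a3; nrmT b1 b2 b3; nrmT c1 c2 c3;
  repeat match goal with H : _ /\ _ |- _ => destruct H end; repeat split; nra.
Ltac trycore a1 b1 c1 a2 b2 c2 a3 b3 c3 x1 y1 z1 x2 y2 z2 x3 y3 z3 :=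
  let G := fresh "G" in
  assert (G : 0 <= f1 (S3 x1 y1 z1 x2 y2 z2 x3 y3 z3) \/ 0 <= f2 (S3 x1 y1 z1 x2 y2 z2 x3 y3 z3))
    by (apply core; auto;
        first [ solveT a1 a2 a3 b1 b2 b3 c1 c2 c3
              | let HH := fresh "HH" in intro HH;
                match goal with N : ~ (_ _ _ _) |- False => apply N; solveT a1 a2 a3 b1 b2 b3 c1 c2 c3 end ]);
  let E := fresh "E" in
  assert (E : ext (S3 x1 y1 z1 x2 y2 z2 x3 y3 z3) (S3 a1 b1 c1 a2 b2 c2 a3 b3 c3))
    by (intros i j k; unfold S3; ring);
  let X1 := fresh "X" in let X2 := fresh "X" in
  assert (X1 := f1_ext _ _ E); assert (X2 := f2_ext _ _ E);
  destruct G as [G|G]; [left | right; left]; lra.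

Definition shared (x12 x13 x23 y12 y13 y23 : R) :=
  (T1 x12 x13 x23 /\ T1 y12 y13 y23) \/ (T2 x12 x13 x23 /\ T2 y12 y13 y23) \/
  (T3 x12 x13 x23 /\ T3 y12 y13 y23).

Lemma LB_S3 a1 b1 c1 a2 b2 c2 a3 b3 c3 :
  nonneg2 a1 -> nonneg2 b1 -> nonneg2 c1 -> nonneg2 a2 -> nonneg2 b2 -> nonneg2 c2 ->
  nonneg2 a3 -> nonneg2 b3 -> nonneg2 c3 ->
  let Sx := S3 a1 b1 c1 a2 b2 c2 a3 b3 c3 in
  0 <= f1 Sx \/ 0 <= f2 Sx \/ 0 <= f3 Sx.
Proof.
  intros A1 B1 C1 A2 B2 C2 A3 B3 C3 Sx.
  destruct (classic (shared (cross b1 b2) (cross b1 b3) (cross b2 b3)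
                            (cross c1 c2) (cross c1 c3) (cross c2 c3))) as [Sh|Nbc].
  { left. apply Kf1; auto. apply shared_compat; auto. }
  destruct (classic (shared (cross a1 a2) (cross a1 a3) (cross a2 a3)
                            (cross c1 c2) (cross c1 c3) (cross c2 c3))) as [Sh|Nac].
  { right; left. unfold Sx, f2. rewrite (f1_ext _ _ (sw12_S3 _ _ _ _ _ _ _ _ _)).
    apply Kf1; auto. apply shared_compat; auto. }
  destruct (classic (shared (cross a1 a2) (cross a1 a3) (cross a2 a3)
                            (cross b1 b2) (cross b1 b3) (cross b2 b3))) as [Sh|Nab].
  { right; right. unfold Sx, f3. rewrite (f1_ext _ _ (sw13_S3 _ _ _ _ _ _ _ _ _)).
    apply Kf1; auto. apply shared_compat. unfold shared in Sh. tauto. }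
  unfold shared in Nbc, Nac, Nab.
  destruct (types a1 a2 a3 A1 A2 A3) as [Ta|[Ta|Ta]];
  destruct (types b1 b2 b3 B1 B2 B3) as [Tb|[Tb|Tb]];
  destruct (types c1 c2 c3 C1 C2 C3) as [Tc|[Tc|Tc]];
  try (exfalso; tauto).
  all: try assert (nA1 : ~ T1 (cross a1 a2) (cross a1 a3) (cross a2 a3)) by tauto.
  all: try assert (nA2 : ~ T2 (cross a1 a2) (cross a1 a3) (cross a2 a3)) by tauto.
  all: try assert (nA3 : ~ T3 (cross a1 a2) (cross a1 a3) (cross a2 a3)) by tauto.
  all: try assert (nB1 : ~ T1 (cross b1 b2) (cross b1 b3) (cross b2 b3)) by tauto.
  all: try assert (nB2 : ~ T2 (cross b1 b2) (cross b1 b3) (cross b2 b3)) by tauto.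
  all: try assert (nB3 : ~ T3 (cross b1 b2) (cross b1 b3) (cross b2 b3)) by tauto.
  all: clear Nab Nac Nbc.
  all: unfold Sx.
  all: first [ trycore a1 b1 c1 a2 b2 c2 a3 b3 c3 a1 b1 c1 a2 b2 c2 a3 b3 c3
             | trycore a1 b1 c1 a2 b2 c2 a3 b3 c3 a2 b2 c2 a1 b1 c1 a3 b3 c3
             | trycore a1 b1 c1 a2 b2 c2 a3 b3 c3 a1 b1 c1 a3 b3 c3 a2 b2 c2
             | trycore a1 b1 c1 a2 b2 c2 a3 b3 c3 a3 b3 c3 a2 b2 c2 a1 b1 c1
             | trycore a1 b1 c1 a2 b2 c2 a3 b3 c3 a2 b2 c2 a3 b3 c3 a1 b1 c1
             | trycore a1 b1 c1 a2 b2 c2 a3 b3 c3 a3 b3 c3 a1 b1 c1 a2 b2 c2 ].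
Qed.
Lemma LB p : M33ex p -> 0 <= f1 p \/ 0 <= f2 p \/ 0 <= f3 p.
Proof.
  intros (a1&b1&c1&a2&b2&c2&a3&b3&c3&H1&H2&H3&H4&H5&H6&H7&H8&H9&H).
  assert (E : ext (S3 a1 b1 c1 a2 b2 c2 a3 b3 c3) p)
    by (intros i j k; rewrite H; unfold S3, outer3; ring).
  rewrite <- (f1_ext _ _ E), <- (f2_ext _ _ E), <- (f3_ext _ _ E).
  apply LB_S3; auto.
Qed.

Lemma prodb x y x' y' e :
  0 <= x <= 1 -> 0 <= y <= 1 -> - e < x' - x < e -> - e < y' - y < e -> e <= 1 ->
  - (3 * e) <= x' * y' - x * y <= 3 * e.
Proof. intros. split; nra. Qed.

Lemma f1_cont p : (forall i j k, 0 <= p i j k <= 1) -> f1 p < 0 ->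
  exists e, 0 < e /\ forall q, (forall i j k, Rabs (p i j k - q i j k) < e) -> f1 q < 0.
Proof.
  intros Hp Hf. exists (Rmin 1 (- f1 p / 100)). split.
  { apply Rmin_glb_lt; lra. }
  intros q Hq. set (e := Rmin 1 (- f1 p / 100)) in *.
  assert (e1 : e <= 1) by apply Rmin_l.
  assert (e2 : e <= - f1 p / 100) by apply Rmin_r.
  assert (B : forall i j k, - e < q i j k - p i j k < e).
  { intros i j k. destruct (Rabs_def2 _ _ (Hq i j k)). split; lra. }
  assert (DB : forall i, - (6 * e) <= Dt q i - Dt p i <= 6 * e /\ -1 <= Dt p i <= 1).
  { intro i. unfold Dt.
    destruct (prodb (p i false false) (p i true true) (q i false false) (q i true true) e) as [X1 X2];
      auto.
    destruct (prodb (p i false true) (p i true false) (q i false true) (q i true false) e) as [Y1 Y2];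
      auto.
    pose proof (Hp i false false); pose proof (Hp i true true);
    pose proof (Hp i false true); pose proof (Hp i true false).
    split; split; try lra; nra. }
  unfold f1 in *.
  destruct (DB false) as [[U1 U2] [U3 U4]]. destruct (DB true) as [[V1 V2] [V3 V4]].
  set (u := Dt p false) in *. set (v := Dt p true) in *.
  set (u' := Dt q false) in *. set (v' := Dt q true) in *.
  assert (u' * v' - u * v <= 48 * e) by nra.
  lra.
Qed.

Lemma entry_le1 p : in_simplex p -> forall i j k, 0 <= p i j k <= 1.
Proof.
  intros [Hn Hs] i j k. split; auto.
  pose proof (Hn false false false); pose proof (Hn false false true);
  pose proof (Hn false true false); pose proof (Hn false true true);
  pose proof (Hn true false false); pose proof (Hn true false true);
  pose proof (Hn true true false); pose proof (Hn true true true).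
  unfold tsum in Hs. destruct i, j, k; lra.
Qed.

Lemma simplex_sw12 p : in_simplex p -> in_simplex (sw12 p).
Proof. intros [A B]; split; [intros; apply A| rewrite tsum_sw12; auto]. Qed.
Lemma simplex_sw13 p : in_simplex p -> in_simplex (sw13 p).
Proof. intros [A B]; split; [intros; apply A| rewrite tsum_sw13; auto]. Qed.
Lemma simplex_fl3 p : in_simplex p -> in_simplex (fl3 p).
Proof. intros [A B]; split; [intros; apply A| rewrite tsum_fl3; auto]. Qed.

Lemma closure_M33 p : in_closure in_RBM32 p -> in_M33 p.
Proof.
  intros [Hs Hc]. split; auto.
  assert (F : 0 <= f1 p \/ 0 <= f2 p \/ 0 <= f3 p).
  { destruct (Rle_dec 0 (f1 p)) as [|N1]; [auto|].
    destruct (Rle_dec 0 (f2 p)) as [|N2]; [auto|].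
    destruct (Rle_dec 0 (f3 p)) as [|N3]; [auto|].
    exfalso.
    destruct (f1_cont p (entry_le1 p Hs)) as (e1&P1&C1); [lra|].
    destruct (f1_cont (sw12 p) (entry_le1 _ (simplex_sw12 p Hs))) as (e2&P2&C2); [unfold f2 in N2; lra|].
    destruct (f1_cont (sw13 p) (entry_le1 _ (simplex_sw13 p Hs))) as (e3&P3&C3); [unfold f3 in N3; lra|].
    set (e := Rmin e1 (Rmin e2 e3)).
    assert (Pe : 0 < e) by (unfold e; repeat apply Rmin_glb_lt; lra).
    assert (E1 : e <= e1) by apply Rmin_l.
    assert (E2 : e <= e2) by (eapply Rle_trans; [apply Rmin_r| apply Rmin_l]).
    assert (E3 : e <= e3) by (eapply Rle_trans; [apply Rmin_r| apply Rmin_r]).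
    destruct (Hc e Pe) as (q & [_ Rq] & Cq).
    destruct (LC q Rq) as [G|[G|G]].
    - assert (f1 q < 0) by (apply C1; intros; specialize (Cq i j k); lra). lra.
    - assert (f1 (sw12 q) < 0) by (apply C2; intros; unfold sw12; specialize (Cq j i k); lra).
      unfold f2 in G; lra.
    - assert (f1 (sw13 q) < 0) by (apply C3; intros; unfold sw13; specialize (Cq k j i); lra).
      unfold f3 in G; lra. }
  apply (dir_reduce nonnegT M33ex); auto.
  - apply M33ex_ext.
  - intros q Hq i j k; apply Hq.
  - intros q Hq i j k; apply Hq.
  - intros q Hq i j k; apply Hq.
  - apply M33ex_sw12.
  - apply M33ex_sw13.
  - apply M33ex_fl3.
  - intros q Hq D0 D1; apply LA; auto.
  - intros i j k; apply (proj1 Hs).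
Qed.
Lemma approx p : in_simplex p -> 0 <= Dt p false -> 0 <= Dt p true ->
  forall eps, 0 < eps -> exists q, in_RBM32 q /\ forall i j k, Rabs (p i j k - q i j k) < eps.
Proof.
  intros Hs D0 D1 eps Heps.
  pose proof (entry_le1 p Hs) as Hb.
  assert (Hp : nonnegT p) by (intros i j k; apply (Hb i j k)).
  unfold Dt in *.
  destruct (sliceA (p false false false) (p false false true) (p false true false) (p false true true))
    as (x0&u00&u01&v00&v01&Hx0&?&?&?&?&E1&E2&E3&E4); try apply Hp; try lra.
  destruct (sliceA (p true false false) (p true false true) (p true true false) (p true true true))
    as (x1&u10&u11&v10&v11&Hx1&?&?&?&?&F1&F2&F3&F4); try apply Hp; try lra.
  assert (X0 : x0 <= 1) by (pose proof (Hb false false false); lra).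
  assert (X1 : x1 <= 1) by (pose proof (Hb true false false); lra).
  set (d := Rmin 1 (eps / 20)).
  assert (Pd : 0 < d) by (unfold d; apply Rmin_glb_lt; lra).
  assert (d1 : d <= 1) by apply Rmin_l.
  assert (d2 : d <= eps / 20) by apply Rmin_r.
  set (diff := fun i j k => (mk x0 x1 i + d) * mv d j * mv d k - mk x0 x1 i * e0v j * e0v k).
  set (q' := fun i j k => p i j k + diff i j k).
  assert (Key : forall i j k, q' i j k = (mk x0 x1 i + d) * mv d j * mv d k
      + (if i then 0 else mk u00 u01 j * mk v00 v01 k) + (if i then mk u10 u11 j * mk v10 v11 k else 0)).
  { intros [|] [|] [|]; unfold q', diff, mk, mv, e0v; simpl; lra. }
  assert (DB : forall i j k, 0 <= diff i j k <= 2 * d).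
  { intros [|] [|] [|]; unfold diff, mk, mv, e0v; simpl; split; nra. }
  set (T := tsum q').
  assert (HT : T = 1 + tsum diff).
  { unfold T. destruct Hs as [_ Hs1]. rewrite <- Hs1. unfold tsum, q'. ring. }
  assert (TD : 0 <= tsum diff <= 16 * d).
  { unfold tsum. pose proof (DB false false false); pose proof (DB false false true);
    pose proof (DB false true false); pose proof (DB false true true);
    pose proof (DB true false false); pose proof (DB true false true);
    pose proof (DB true true false); pose proof (DB true true true). lra. }
  assert (PT : 1 <= T) by lra.
  set (q := fun i j k => q' i j k / T).
  exists q. split; [split; [split|]|].
  - intros i j k. unfold q. apply Rmult_le_pos; [|left; apply Rinv_0_lt_compat; lra].
    unfold q'. pose proof (Hp i j k); pose proof (DB i j k); lra.
  - assert (Eq : tsum q = tsum q' / T) by (unfold q, tsum; field; lra).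
    rewrite Eq. change (tsum q') with T. field. lra.
  - assert (Hdiv : forall x y, 0 <= x -> 0 < y -> 0 <= x / y)
      by (intros; apply Rmult_le_pos; [lra| left; apply Rinv_0_lt_compat; lra]).
    apply (special_RBM (fun i => (mk x0 x1 i + d) / T) (mv d) (mv d)
             (fun j => mk u00 u01 j / T) (mk v00 v01) (fun j => mk u10 u11 j / T) (mk v10 v11)).
    + intros [|]; apply Hdiv; unfold mk; lra.
    + intros [|]; unfold mv; lra.
    + intros [|]; unfold mv; lra.
    + intros [|]; apply Hdiv; unfold mk; lra.
    + intros [|]; unfold mk; lra.
    + intros [|]; apply Hdiv; unfold mk; lra.
    + intros [|]; unfold mk; lra.
    + intros i j k. unfold q. rewrite Key. destruct i; field; lra.
  - intros i j k. unfold q, q'.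
    set (r := (p i j k + diff i j k) / T).
    assert (Er : r * T = p i j k + diff i j k) by (unfold r; field; lra).
    pose proof (Hb i j k); pose proof (DB i j k).
    apply Rabs_def1; nra.
Qed.
Definition approxQ (p : tensor) :=
  forall eps, 0 < eps -> exists q, in_RBM32 q /\ forall i j k, Rabs (p i j k - q i j k) < eps.

Lemma RBM32_sw12 q : in_RBM32 q -> in_RBM32 (sw12 q).
Proof. intros [A B]; split; [apply simplex_sw12| apply RBMex_sw12]; auto. Qed.
Lemma RBM32_sw13 q : in_RBM32 q -> in_RBM32 (sw13 q).
Proof. intros [A B]; split; [apply simplex_sw13| apply RBMex_sw13]; auto. Qed.
Lemma RBM32_fl3 q : in_RBM32 q -> in_RBM32 (fl3 q).
Proof. intros [A B]; split; [apply simplex_fl3| apply RBMex_fl3]; auto. Qed.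

Lemma M33_closure p : in_M33 p -> in_closure in_RBM32 p.
Proof.
  intros [Hs Hm]. split; auto.
  pose proof (LB p Hm) as F.
  cut (approxQ p); [intros A; exact A|].
  apply (dir_reduce in_simplex approxQ); auto.
  - intros p0 q0 E A eps He. destruct (A eps He) as (q & R & C). exists q; split; auto.
    intros; rewrite <- E; auto.
  - apply simplex_sw12.
  - apply simplex_sw13.
  - apply simplex_fl3.
  - intros p0 A eps He. destruct (A eps He) as (q & R & C). exists (sw12 q); split.
    + apply RBM32_sw12; auto.
    + intros; unfold sw12; auto.
  - intros p0 A eps He. destruct (A eps He) as (q & R & C). exists (sw13 q); split.
    + apply RBM32_sw13; auto.
    + intros; unfold sw13; auto.
  - intros p0 A eps He. destruct (A eps He) as (q & R & C). exists (fl3 q); split.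
    + apply RBM32_fl3; auto.
    + intros; unfold fl3; auto.
  - intros p0 Hp0 D0 D1 eps He. apply approx; auto.
Qed.

Theorem theorem2 :
  (forall p : tensor, in_M33 p <-> in_closure in_RBM32 p) /\
  (forall p : tensor, strictly_positive p -> (in_M33 p <-> in_RBM32 p)).
Proof.
  split.
  - intro p; split; [apply M33_closure | apply closure_M33].
  - intros p Hp; split.
    + intros [Hs Hm]. split; auto.
      apply (dir_reduce strictly_positive RBMex); auto.
      * apply RBMex_ext.
      * intros q Hq i j k; apply Hq.
      * intros q Hq i j k; apply Hq.
      * intros q Hq i j k; apply Hq.
      * apply RBMex_sw12.
      * apply RBMex_sw13.
      * apply RBMex_fl3.
      * intros q Hq D0 D1; apply LD; auto.
      * apply LB; auto.
    + intros [Hs Hr]. split; auto.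
      apply (dir_reduce nonnegT M33ex); auto.
      * apply M33ex_ext.
      * intros q Hq i j k; apply Hq.
      * intros q Hq i j k; apply Hq.
      * intros q Hq i j k; apply Hq.
      * apply M33ex_sw12.
      * apply M33ex_sw13.
      * apply M33ex_fl3.
      * intros q Hq D0 D1; apply LA; auto.
      * intros i j k; apply (proj1 Hs).
      * apply LC; auto.
Qed.
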